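(* There exists an instance with two agents $N=\{1,2\}$ and a finite item set $A$ with no externalities (i.e., $V_i(j,a)=0$ for all $a\in A$ and $i\ne j$) together with a complete allocation that is envy-free but does not satisfy PROP-Max.
   Context: Setting: agents $N=\{1,\dots,n\}$, finite item set $A$; a complete allocation $\pi$ partitions $A$ into bundles $\pi_1,\dots,\pi_n$; $\pi(a)$ is the agent receiving $a$; $V_i(j,a)\in\mathbb{R}$ is agent $i$'s value when item $a$ goes to agent $j$; $V_i(\pi)=\sum_{a\in A}V_i(\pi(a),a)$. $\pi^{i\leftrightarrow j}$ is $\pi$ with bundles of $i$ and $j$ swapped. $\pi$ is envy-free (EF) if there are no agents $i,j$ with $V_i(\pi^{i\leftrightarrow j})>V_i(\pi)$. With $V_i^{max}(a)=\max_{j\in N}V_i(j,a)$, $\pi$ satisfies PROP-Max if $V_i(\pi)\ge\frac1n\sum_{a\in A}V_i^{max}(a)$ for all $i\in N$. *)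

(* Defs.v *)
From mathcomp Require Import all_boot all_order all_algebra.
From mathcomp Require Import Rstruct.
From Stdlib Require Import Reals.
Set Implicit Arguments. Unset Strict Implicit. Unset Printing Implicit Defensive.
Import Order.TTheory GRing.Theory Num.Theory.
Local Open Scope ring_scope.

(* A valuation V : agent -> agent -> item -> R, V i j a = value to agent i
   when item a is given to agent j.
   A complete allocation is a function pi : A -> 'I_n (pi a = recipient);
   bundle of j is [set a | pi a == j]. *)

Definition valuation (n : nat) (A : finType) := 'I_n -> 'I_n -> A -> R.
Definition allocation (n : nat) (A : finType) := A -> 'I_n.

Definition value n (A : finType) (V : valuation n A) (i : 'I_n)
  (pi : allocation n A) : R :=
  \sum_(a : A) V i (pi a) a.

Definition swap_alloc n (A : finType) (pi : allocation n A) (i j : 'I_n)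
  : allocation n A :=
  fun a => if pi a == i then j else if pi a == j then i else pi a.

Definition envy_free n (A : finType) (V : valuation n A) (pi : allocation n A)
  : Prop :=
  forall i j : 'I_n, ~ (value V i pi < value V i (swap_alloc pi i j)).

Definition Vmax n (A : finType) (V : valuation n A) (i : 'I_n) (a : A) : R :=
  \big[Num.max/V i i a]_(j < n) V i j a.

Definition prop_max n (A : finType) (V : valuation n A) (pi : allocation n A)
  : Prop :=
  forall i : 'I_n, (n%:R)^-1 * (\sum_(a : A) Vmax V i a) <= value V i pi.

Definition no_externalities n (A : finType) (V : valuation n A) : Prop :=
  forall (i j : 'I_n) (a : A), i != j -> V i j a = 0.

(* Main.v *)
Require Import Defs.
From mathcomp Require Import all_boot all_order all_algebra.
From mathcomp Require Import Rstruct.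
From Stdlib Require Import Reals.
Import Order.TTheory GRing.Theory Num.Theory.
Local Open Scope ring_scope.

Definition V0 : valuation 2 bool :=
  fun i j a => if (i == ord0) && (j == ord0) then (if a then 1 else -1) else 0.

Lemma sum_bool (F : bool -> R) : \sum_(a : bool) F a = F true + F false.
Proof. by rewrite big_bool. Qed.

Lemma bm_seed (I : finType) (x : R) (F : I -> R) :
  x <= \big[Num.max/x]_(j : I) F j.
Proof. by elim/big_rec: _ => // j y _ h; rewrite le_max h orbT. Qed.

Lemma bm_F (I : finType) (x : R) (F : I -> R) (j : I) :
  F j <= \big[Num.max/x]_(j : I) F j.
Proof.
have : j \in index_enum I by rewrite mem_index_enum.
rewrite /index_enum; elim: (Finite.enum I) => // k s IH.
rewrite inE big_cons => /orP[/eqP->|/IH h]; first by rewrite le_max lexx.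
by rewrite le_max h orbT.
Qed.

Theorem proposition1 :
  exists (A : finType) (V : valuation 2 A) (pi : allocation 2 A),
    no_externalities V /\ envy_free V pi /\ ~ prop_max V pi.
Proof.
exists bool, V0, (fun _ => ord0).
split; [|split].
- move=> i j a hij; rewrite /V0.
  case: i hij => [[|[|//]] ?]; case: j => [[|[|//]] ?] //= _; by rewrite andbF.
- move=> i j; rewrite /value /swap_alloc /V0 !sum_bool /=.
  case: i => [[|[|//]] ?]; case: j => [[|[|//]] ?]; rewrite /= ?addr0 ?subrr ?ltxx //.
- move=> /(_ ord0); rewrite /value /Vmax !sum_bool.
  have h1 := bm_seed _ (V0 ord0 ord0 true) (fun j : 'I_2 => V0 ord0 j true).
  have h2 := bm_F _ (V0 ord0 ord0 false) (fun j : 'I_2 => V0 ord0 j false) ord_max.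
  move: h1 h2; set a := \big[_/_]_(_ < _) _; set b := \big[_/_]_(_ < _) _.
  rewrite /V0 /= => h1 h2 h.
  have : 2^-1 * (1 + 0) <= 2^-1 * (a + b) :> R.
    by rewrite ler_wpM2l ?invr_ge0 ?ler0n // lerD.
  move/le_trans/(_ h); rewrite addr0 mulr1 subrr leNgt.
  by move/negP; apply; rewrite invr_gt0 ltr0n.
Qed.
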